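(* Let $m \geq 0$, $n \geq 1$ be integers and let $c = (c^t; c^b)$ be a stable configuration on $K_{m,n}^0$. For $j \in \{1,\ldots,n\}$ define $k_j := |\{ i \in \{1,\ldots,m\} : c^t_i < j\}|$, and let $(\tilde{c}^b_1, \ldots, \tilde{c}^b_n)$ be the non-decreasing rearrangement of $c^b$. Then $c$ is deterministically recurrent if and only if $\tilde{c}^b_j \geq k_j$ for all $j \in \{1, \ldots, n\}$.
   Context: $K_{m,n}^0$ is the complete bipartite graph with ''top'' vertices $v^t_0, v^t_1, \ldots, v^t_m$ and ''bottom'' vertices $v^b_1, \ldots, v^b_n$, with an edge between every top vertex and every bottom vertex; $v^t_0$ is the sink. A configuration is a vector $c = (c^t_1, \ldots, c^t_m; c^b_1, \ldots, c^b_n)$ of non-negative integers ($c^*_i$ = number of grains at $v^*_i$). $c$ is stable if $c^t_i < n$ for all $i$ and $c^b_j < m+1$ for all $j$ (number of grains less than the degree). Abelian sandpile model (ASM): an unstable non-sink vertex topples by sending one grain to each of its neighbours (for bottom vertices this includes the sink); grains sent to the sink disappear. Repeated toppling from any configuration reaches a unique stable configuration independent of toppling order. In the Markov chain on stable configurations which at each step adds a grain to a uniformly random non-sink vertex and then stabilises by the ASM, a stable configuration is deterministically recurrent if it is a recurrent state (appears infinitely often). *)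

(* Defs.v *)
From mathcomp Require Import all_boot.
Set Implicit Arguments. Unset Strict Implicit. Unset Printing Implicit Defensive.

(* A configuration on K_{m,n}^0: grains on top vertices v^t_1..v^t_m
   (indexed by 'I_m, index i stands for v^t_{i+1}) and on bottom vertices
   v^b_1..v^b_n (indexed by 'I_n). The sink v^t_0 carries no grains. *)
Definition config (m n : nat) := ({ffun 'I_m -> nat} * {ffun 'I_n -> nat})%type.

Definition ctop m n (c : config m n) := c.1.
Definition cbot m n (c : config m n) := c.2.

(* stable: fewer grains than the degree at every non-sink vertex
   (top vertices have degree n, bottom vertices have degree m+1). *)
Definition stable m n (c : config m n) : Prop :=
  (forall i, ctop c i < n) /\ (forall j, cbot c j < m.+1).

Inductive topple_step (m n : nat) : config m n -> config m n -> Prop :=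
| topple_top (c : config m n) (i : 'I_m) :
    n <= ctop c i ->
    topple_step c
      ([ffun i' => if i' == i then ctop c i' - n else ctop c i'],
       [ffun j => (cbot c j).+1])
| topple_bot (c : config m n) (j : 'I_n) :
    m.+1 <= cbot c j ->
    topple_step c
      ([ffun i => (ctop c i).+1],
       [ffun j' => if j' == j then cbot c j' - m.+1 else cbot c j']).

Inductive star (T : Type) (R : T -> T -> Prop) : T -> T -> Prop :=
| star_refl x : star R x x
| star_step x y z : R x y -> star R y z -> star R x z.

Definition stabilises_to m n (c s : config m n) : Prop :=
  star (@topple_step m n) c s /\ stable s.

Definition vertex (m n : nat) := ('I_m + 'I_n)%type.

Definition add_grain m n (v : vertex m n) (c : config m n) : config m n :=
  match v with
  | inl i => ([ffun i' => if i' == i then (ctop c i').+1 else ctop c i'], cbot c)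
  | inr j => (ctop c, [ffun j' => if j' == j then (cbot c j').+1 else cbot c j'])
  end.

(* Transitions with positive probability (1/(m+n) per vertex) of the Markov
   chain: add a grain at a non-sink vertex, then stabilise. *)
Definition chain_step m n (c d : config m n) : Prop :=
  exists v : vertex m n, stabilises_to (add_grain v c) d.

Definition accessible m n := star (@chain_step m n).

(* Recurrent state of the finite Markov chain on stable configurations:
   every state accessible from c leads back to c. *)
Definition det_recurrent m n (c : config m n) : Prop :=
  stable c /\ forall d, accessible c d -> accessible d c.

Definition kcount m n (c : config m n) (j : nat) : nat :=
  #|[set i : 'I_m | ctop c i < j]|.

(* non-decreasing rearrangement of c^b, as a list (0-indexed) *)
Definition sorted_bot m n (c : config m n) : seq nat :=
  sort leq [seq cbot c j | j <- enum 'I_n].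

(* Main.v *)
Require Import Defs.
From mathcomp Require Import all_boot.
From mathcomp Require Import zify.
Set Implicit Arguments. Unset Strict Implicit. Unset Printing Implicit Defensive.

Lemma cfg_eq m n (c d : config m n) :
  (forall i, ctop c i = ctop d i) -> (forall j, cbot c j = cbot d j) -> c = d.
Proof.
case: c => [ct cb]; case: d => [dt db]; rewrite /ctop /cbot /= => Ht Hb.
by congr pair; apply/ffunP.
Qed.

Lemma star_trans T (R : T -> T -> Prop) x y z : star R x y -> star R y z -> star R x z.
Proof. elim=> [//|a b c Hab _ IH] Hz; exact: star_step Hab (IH Hz). Qed.

Lemma star_one T (R : T -> T -> Prop) x y : R x y -> star R x y.
Proof. move=> H; exact: star_step H (star_refl _ _). Qed.

Definition ttop m n (c : config m n) (i : 'I_m) : config m n :=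
  ([ffun i' => if i' == i then ctop c i' - n else ctop c i'],
   [ffun j => (cbot c j).+1]).
Definition tbot m n (c : config m n) (j : 'I_n) : config m n :=
  ([ffun i => (ctop c i).+1],
   [ffun j' => if j' == j then cbot c j' - m.+1 else cbot c j']).

Lemma stepP m n (c c' : config m n) : topple_step c c' ->
  (exists2 i, n <= ctop c i & c' = ttop c i) \/
  (exists2 j, m.+1 <= cbot c j & c' = tbot c j).
Proof. case=> [d i H|d j H]; [left; exists i|right; exists j] => //. Qed.

Lemma ttop_step m n (c c' : config m n) i : n <= ctop c i -> c' = ttop c i -> topple_step c c'.
Proof. move=> H ->; exact: topple_top. Qed.
Lemma tbot_step m n (c c' : config m n) j : m.+1 <= cbot c j -> c' = tbot c j -> topple_step c c'.
Proof. move=> H ->; exact: topple_bot. Qed.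

Ltac unf := unfold ttop, tbot, ctop, cbot in *; rewrite /= ?ffunE.

Lemma diamond m n (c c1 c2 : config m n) : topple_step c c1 -> topple_step c c2 ->
  c1 = c2 \/ exists c3, topple_step c1 c3 /\ topple_step c2 c3.
Proof.
move=> /stepP [[i Hi ->]|[j Hj ->]] /stepP [[i' Hi' ->]|[j' Hj' ->]].
- case: (eqVneq i i') => [<-|ne]; first by left.
  right; exists (ttop (ttop c i) i'); split.
    by apply: (ttop_step (i:=i')) => //; unf; rewrite eq_sym (negbTE ne).
  apply: (ttop_step (i:=i)); first by unf; rewrite (negbTE ne).
  apply: cfg_eq => x; unf => //.
  case: (eqVneq x i) => [xi|xi]; case: (eqVneq x i') => [xi'|xi'] //.
- right; exists (tbot (ttop c i) j'); split.
    by apply: (tbot_step (j:=j')) => //; unf; lia.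
  apply: (ttop_step (i:=i)); first by unf; lia.
  apply: cfg_eq => x; unf => //.
    by case: (eqVneq x i) => [->|//]; lia.
  by case: (eqVneq x j') => [->|//]; lia.
- right; exists (ttop (tbot c j) i'); split.
    by apply: (ttop_step (i:=i')) => //; unf; lia.
  apply: (tbot_step (j:=j)); first by unf; lia.
  apply: cfg_eq => x; unf => //.
    by case: (eqVneq x i') => [->|//]; lia.
  by case: (eqVneq x j) => [->|//]; lia.
- case: (eqVneq j j') => [<-|ne]; first by left.
  right; exists (tbot (tbot c j) j'); split.
    by apply: (tbot_step (j:=j')) => //; unf; rewrite eq_sym (negbTE ne).
  apply: (tbot_step (j:=j)); first by unf; rewrite (negbTE ne).
  apply: cfg_eq => x; unf => //.
  case: (eqVneq x j) => [xi|xi]; case: (eqVneq x j') => [xi'|xi'] //.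
Qed.
Definition tsum m n (c : config m n) := \sum_i ctop c i.
Definition bsum m n (c : config m n) := \sum_j cbot c j.
Definition mu m n (c : config m n) := (tsum c + bsum c) * (tsum c + bsum c) + tsum c.

Lemma tsum_ttop m n (c : config m n) i : n <= ctop c i -> tsum (ttop c i) + n = tsum c.
Proof.
move=> H; rewrite /tsum (bigD1 i) //= [RHS](bigD1 i) //=.
have -> : \sum_(i' | i' != i) ctop (ttop c i) i' = \sum_(i' | i' != i) ctop c i'.
  by apply: eq_bigr => i' /negbTE Hi; unf; rewrite Hi.
unf; rewrite eqxx; lia.
Qed.

Lemma bsum_tbot m n (c : config m n) j : m.+1 <= cbot c j -> bsum (tbot c j) + m.+1 = bsum c.
Proof.
move=> H; rewrite /bsum (bigD1 j) //= [RHS](bigD1 j) //=.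
have -> : \sum_(j' | j' != j) cbot (tbot c j) j' = \sum_(j' | j' != j) cbot c j'.
  by apply: eq_bigr => i' /negbTE Hi; unf; rewrite Hi.
unf; rewrite eqxx; lia.
Qed.

Lemma bsum_ttop m n (c : config m n) i : bsum (ttop c i) = bsum c + n.
Proof.
rewrite /bsum (eq_bigr (fun j => cbot c j + 1)); last by move=> j _; unf; rewrite addn1.
by rewrite big_split /= sum1_card card_ord.
Qed.

Lemma tsum_tbot m n (c : config m n) j : tsum (tbot c j) = tsum c + m.
Proof.
rewrite /tsum (eq_bigr (fun i => ctop c i + 1)); last by move=> i _; unf; rewrite addn1.
by rewrite big_split /= sum1_card card_ord.
Qed.

Lemma mu_step m n (c c' : config m n) : 0 < n -> topple_step c c' -> mu c' < mu c.
Proof.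
move=> Hn /stepP [[i Hi ->]|[j Hj ->]]; rewrite /mu.
- have := tsum_ttop Hi; have := bsum_ttop c i.
  move: (tsum (ttop c i)) (bsum (ttop c i)) (tsum c) (bsum c) => a b a' b'; nia.
- have := bsum_tbot Hj; have := tsum_tbot c j.
  move: (tsum (tbot c j)) (bsum (tbot c j)) (tsum c) (bsum c) => a b a' b'; nia.
Qed.

Lemma stable_nostep m n (c c' : config m n) : stable c -> topple_step c c' -> False.
Proof.
move=> [Ht Hb] /stepP [[i Hi _]|[j Hj _]].
  by have := Ht i; rewrite ltnNge Hi.
by have := Hb j; rewrite ltnNge Hj.
Qed.

Lemma stable_star m n (c s : config m n) : stable c -> star (@topple_step m n) c s -> s = c.
Proof. move=> Hc H; case: H Hc => [//|x y z H _] Hc; case: (stable_nostep Hc H). Qed.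

Lemma exists_stab m n (c : config m n) : 0 < n -> exists s, stabilises_to c s.
Proof.
move=> Hn; have [k Hk] : exists k, mu c < k by exists (mu c).+1.
elim: k c Hk => [//|k IH] c Hk.
case: (boolP [exists i, n <= ctop c i]) => [/existsP [i Hi]|/existsPn H1].
  have [s [Hs1 Hs2]] := IH (ttop c i) (leq_trans (mu_step Hn (topple_top Hi)) Hk).
  by exists s; split => //; apply: star_step Hs1; apply: topple_top.
case: (boolP [exists j, m.+1 <= cbot c j]) => [/existsP [j Hj]|/existsPn H2].
  have [s [Hs1 Hs2]] := IH (tbot c j) (leq_trans (mu_step Hn (topple_bot Hj)) Hk).
  by exists s; split => //; apply: star_step Hs1; apply: topple_bot.
exists c; split; first exact: star_refl.
by split=> [i|j]; rewrite ltnNge; [exact: H1|exact: H2].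
Qed.

Lemma uniq_stab m n (c s1 s2 : config m n) : 0 < n ->
  star (@topple_step m n) c s1 -> stable s1 ->
  star (@topple_step m n) c s2 -> stable s2 -> s1 = s2.
Proof.
move=> Hn; have [k Hk] : exists k, mu c < k by exists (mu c).+1.
elim: k c s1 s2 Hk => [//|k IH] c s1 s2 Hk H1 S1 H2 S2.
destruct H1 as [x|x y1 z1 St1 R1].
  by rewrite (stable_star S1 H2).
destruct H2 as [x'|x' y2 z2 St2 R2].
  by case: (stable_nostep S2 St1).
have Hy1 := leq_trans (mu_step Hn St1) Hk.
have Hy2 := leq_trans (mu_step Hn St2) Hk.
case: (diamond St1 St2) => [E|[c3 [T1 T2]]].
  by subst y2; apply: (IH y1).
have [s3 [Hs3 S3]] := exists_stab c3 Hn.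
have -> : z1 = s3 by apply: (IH y1) => //; apply: star_step T1 Hs3.
by apply: (IH y2) => //; apply: star_step T2 Hs3.
Qed.
Definition addc m n (c x : config m n) : config m n :=
  ([ffun i => ctop c i + ctop x i], [ffun j => cbot c j + cbot x j]).

Ltac unfa := unfold addc, add_grain, ttop, tbot, ctop, cbot in *; rewrite /= ?ffunE.

Lemma step_addc m n (c c' x : config m n) :
  topple_step c c' -> topple_step (addc c x) (addc c' x).
Proof.
move=> /stepP [[i Hi ->]|[j Hj ->]].
- apply: (ttop_step (i:=i)); first by unfa; lia.
  by apply: cfg_eq => y; unfa => //; case: eqP => // ->; lia.
- apply: (tbot_step (j:=j)); first by unfa; lia.
  by apply: cfg_eq => y; unfa => //; case: eqP => // ->; lia.
Qed.

Lemma star_addc m n (c c' x : config m n) :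
  star (@topple_step m n) c c' -> star (@topple_step m n) (addc c x) (addc c' x).
Proof.
elim=> [y|a b z H _ IH]; first exact: star_refl.
exact: star_step (step_addc x H) IH.
Qed.

Lemma sum_dec p (f : {ffun 'I_p -> nat}) i k : k <= f i ->
  \sum_j [ffun j => if j == i then f j - k else f j] j + k = \sum_j f j.
Proof.
move=> H; rewrite (bigD1 i) //= [RHS](bigD1 i) //=.
have -> : \sum_(j | j != i) [ffun j => if j == i then f j - k else f j] j
        = \sum_(j | j != i) f j.
  by apply: eq_bigr => j /negbTE Hj; rewrite ffunE Hj.
by rewrite ffunE eqxx addnAC subnK.
Qed.

Lemma sum_zero p (f : 'I_p -> nat) : (forall i, f i = 0) -> \sum_i f i = 0.
Proof. by move=> H; apply: big1 => i _. Qed.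

Lemma sum_zero_inv p (f : 'I_p -> nat) i : \sum_j f j = 0 -> f i = 0.
Proof. by move=> H; apply/eqP; move: H => /eqP; rewrite sum_nat_eq0 => /forallP /(_ i) /implyP; apply. Qed.

Lemma acc_stable m n (c d : config m n) : stable c -> accessible c d -> stable d.
Proof.
move=> Hc H; elim: H Hc => [//|x y z [v [_ Sy]] _ IH] _; exact: IH.
Qed.

Lemma reach_add m n k : 0 < n -> forall (x d s : config m n),
  tsum x + bsum x = k -> stable d -> stabilises_to (addc d x) s -> accessible d s.
Proof.
move=> Hn; elim: k => [|k IH] x d s Hk Sd [Hs Ss].
  have E : addc d x = d.
    apply: cfg_eq => [i|j]; unfa.
      have := @sum_zero_inv _ (ctop x) i; rewrite /tsum in Hk; unfold ctop in *; lia.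
    have := @sum_zero_inv _ (cbot x) j; rewrite /bsum in Hk; unfold cbot in *; lia.
  rewrite E in Hs; rewrite (stable_star Sd Hs); exact: star_refl.
have step : forall (v : vertex m n) (x' : config m n),
    tsum x' + bsum x' = k -> addc d x = addc (add_grain v d) x' -> accessible d s.
  move=> v x' Hk' E.
  have [d1 [Hd1 Sd1]] := exists_stab (add_grain v d) Hn.
  have [s1 [Hs1 Ss1]] := exists_stab (addc d1 x') Hn.
  have Hst : star (@topple_step m n) (addc d x) s1.
    by rewrite E; apply: star_trans (star_addc x' Hd1) Hs1.
  rewrite (uniq_stab Hn Hs Ss Hst Ss1).
  apply: star_step (IH x' d1 s1 Hk' Sd1 (conj Hs1 Ss1)).
  by exists v; split.
case: (boolP [exists i, 0 < ctop x i]) => [/existsP [i Hi]|/existsPn H1].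
  pose x' : config m n := ([ffun i' => if i' == i then ctop x i' - 1 else ctop x i'], cbot x).
  apply: (step (inl i) x').
    have := @sum_dec _ (ctop x) i 1 Hi; rewrite /tsum /bsum /x' /= in Hk *.
    unfold ctop, cbot in *; rewrite /=; lia.
  by apply: cfg_eq => [i'|j]; rewrite /x'; unfa => //; case: eqP => // ->; lia.
have T0 : tsum x = 0 by apply: sum_zero => i; have := H1 i; lia.
case: (boolP [exists j, 0 < cbot x j]) => [/existsP [j Hj]|/existsPn H2].
  pose x' : config m n := (ctop x, [ffun j' => if j' == j then cbot x j' - 1 else cbot x j']).
  apply: (step (inr j) x').
    have := @sum_dec _ (cbot x) j 1 Hj; rewrite /tsum /bsum /x' /= in Hk T0 *.
    unfold ctop, cbot in *; rewrite /=; lia.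
  by apply: cfg_eq => [i'|j']; rewrite /x'; unfa => //; case: eqP => // ->; lia.
have B0 : bsum x = 0 by apply: sum_zero => j; have := H2 j; lia.
lia.
Qed.
Definition nofsc m n (c : config m n) : Prop :=
  forall (A : {set 'I_m}) (B : {set 'I_n}), B != set0 ->
    (forall i, i \in A -> ctop c i < #|B|) ->
    (forall j, j \in B -> cbot c j < #|A|) -> False.

Lemma nofsc_step m n (c c' : config m n) : topple_step c c' -> nofsc c -> nofsc c'.
Proof.
move=> /stepP [[i0 Hi0 ->]|[j0 Hj0 ->]] H A B HB HA HBb.
- case: (boolP (i0 \in A)) => Hi.
  + apply: (H (A :\ i0) B HB).
    * move=> i; rewrite !inE => /andP [ne iA]; have := HA i iA; unf.
      by rewrite (negbTE ne).
    * move=> j jB; have := HBb j jB; rewrite (cardsD1 i0 A) Hi /=; unf; set k := #|A :\ i0|; lia.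
  + apply: (H A B HB).
    * move=> i iA; have := HA i iA; unf; case: eqP => [E|//]; subst.
      by rewrite iA in Hi.
    * move=> j jB; have := HBb j jB; unf; lia.
- case: (boolP (j0 \in B)) => Hj.
  + have HA0 : 0 < #|A| by have := HBb j0 Hj; lia.
    move: (HA0); rewrite card_gt0 => /set0Pn [i iA].
    have := HA i iA; rewrite (cardsD1 j0 B) Hj /= ffunE => Hi.
    apply: (H A (B :\ j0)).
    * rewrite -card_gt0; set k := #|B :\ j0| in Hi *; lia.
    * move=> i' iA'; have := HA i' iA'; rewrite (cardsD1 j0 B) Hj /=; unf; set k := #|B :\ j0|; lia.
    * move=> j; rewrite !inE => /andP [ne jB]; have := HBb j jB; unf.
      by rewrite (negbTE ne).
  + apply: (H A B HB).
    * move=> i iA; have := HA i iA; unf; lia.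
    * move=> j jB; have := HBb j jB; unf; case: eqP => [E|//]; subst.
      by rewrite jB in Hj.
Qed.

Lemma nofsc_add m n (c : config m n) v : nofsc c -> nofsc (add_grain v c).
Proof.
case: v => [i0|j0] H A B HB HA HBb; apply: (H A B HB).
- move=> i iA; have := HA i iA; unfa; case: eqP => //; lia.
- move=> j jB; have := HBb j jB; unfa; lia.
- move=> i iA; have := HA i iA; unfa; lia.
- move=> j jB; have := HBb j jB; unfa; case: eqP => //; lia.
Qed.

Lemma nofsc_star m n (c d : config m n) : star (@topple_step m n) c d -> nofsc c -> nofsc d.
Proof. elim=> [//|x y z H _ IH] Hx; exact: IH (nofsc_step H Hx). Qed.

Lemma nofsc_acc m n (c d : config m n) : accessible c d -> nofsc c -> nofsc d.
Proof.
elim=> [//|x y z [v [Hs _]] _ IH] Hx; apply: IH.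
apply: (nofsc_star Hs); exact: nofsc_add.
Qed.

Definition bstate m n (e : config m n) (P : {set 'I_m}) (Q : {set 'I_n}) : config m n :=
  ([ffun i => ctop e i + #|Q| - (if i \in P then n else 0)],
   [ffun j => cbot e j + 1 + #|P| - (if j \in Q then m.+1 else 0)]).

Lemma ttopE_t m n (c : config m n) i x : ctop (ttop c i) x = if x == i then ctop c x - n else ctop c x.
Proof. by rewrite /ttop /ctop ffunE. Qed.
Lemma ttopE_b m n (c : config m n) i j : cbot (ttop c i) j = (cbot c j).+1.
Proof. by rewrite /ttop /cbot ffunE. Qed.
Lemma tbotE_t m n (c : config m n) j i : ctop (tbot c j) i = (ctop c i).+1.
Proof. by rewrite /tbot /ctop ffunE. Qed.
Lemma tbotE_b m n (c : config m n) j x : cbot (tbot c j) x = if x == j then cbot c x - m.+1 else cbot c x.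
Proof. by rewrite /tbot /cbot ffunE. Qed.
Lemma bstateE_t m n (e : config m n) (P : {set 'I_m}) (Q : {set 'I_n}) i :
  ctop (bstate e P Q) i = ctop e i + #|Q| - (if i \in P then n else 0).
Proof. by rewrite /bstate /ctop ffunE. Qed.
Lemma bstateE_b m n (e : config m n) (P : {set 'I_m}) (Q : {set 'I_n}) j :
  cbot (bstate e P Q) j = cbot e j + 1 + #|P| - (if j \in Q then m.+1 else 0).
Proof. by rewrite /bstate /cbot ffunE. Qed.

Ltac revert_arith := repeat match goal with
 | H : @eq nat _ _ |- _ => revert H
 | H : is_true (leq _ _) |- _ => revert H
 end.
Ltac abs_card := repeat match goal with |- context [card ?A] => let x := fresh "k" in set x := card A end.
Ltac lia' := revert_arith; abs_card; lia.

Lemma burn m n (e : config m n) : nofsc e -> forall k (P : {set 'I_m}) (Q : {set 'I_n}), #|~:P| + #|~:Q| = k ->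
  (forall i, i \in P -> n <= ctop e i + #|Q|) ->
  (forall j, j \in Q -> m <= cbot e j + #|P|) ->
  star (@topple_step m n) (bstate e P Q) (bstate e setT setT).
Proof.
move=> He; elim=> [|k IH] P Q Hk HP HQ.
  have EP : P = setT by rewrite -(setCK P) (cards0_eq (_ : #|~: P| = 0)) ?setC0 //; lia'.
  have EQ : Q = setT by rewrite -(setCK Q) (cards0_eq (_ : #|~: Q| = 0)) ?setC0 //; lia'.
  rewrite EP EQ; exact: star_refl.
have cP := cardsC P; have cQ := cardsC Q; rewrite !card_ord in cP cQ.
case: (pickP [pred i | (i \notin P) && (n <= ctop e i + #|Q|)]) => [i /andP [iP Hi]|Nt].
  apply: (star_step (y := bstate e (i |: P) Q)).
    apply: (ttop_step (i:=i)); first by rewrite bstateE_t (negbTE iP); lia'.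
    apply: cfg_eq => [x|j]; rewrite ?ttopE_t ?ttopE_b ?bstateE_t ?bstateE_b.
      rewrite in_setU1; case: eqP => [->|_] /=; first by rewrite (negbTE iP); lia'.
      by [].
    rewrite cardsU1 iP /=.
    case: (boolP (j \in Q)) => jQ; last lia'.
    have := HQ j jQ; lia'.
  apply: IH.
  - have := cardsC (i |: P); rewrite cardsU1 iP card_ord /=; lia'.
  - move=> x; rewrite in_setU1 => /orP [/eqP -> //|]; exact: HP.
  - move=> j jQ; have := HQ j jQ; rewrite cardsU1; lia'.
case: (pickP [pred j | (j \notin Q) && (m <= cbot e j + #|P|)]) => [j /andP [jQ Hj]|Nb].
  apply: (star_step (y := bstate e P (j |: Q))).
    apply: (tbot_step (j:=j)); first by rewrite bstateE_b (negbTE jQ); lia'.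
    apply: cfg_eq => [i|x]; rewrite ?tbotE_t ?tbotE_b ?bstateE_t ?bstateE_b.
      rewrite cardsU1 jQ /=.
      case: (boolP (i \in P)) => iP; last lia'.
      have := HP i iP; lia'.
    rewrite in_setU1; case: eqP => [->|_] /=; first by rewrite (negbTE jQ); lia'.
    by [].
  apply: IH.
  - have := cardsC (j |: Q); rewrite cardsU1 jQ card_ord /=; lia'.
  - move=> i iP; have := HP i iP; rewrite cardsU1; lia'.
  - move=> x; rewrite in_setU1 => /orP [/eqP -> //|]; exact: HQ.
exfalso.
have cB : #|~: Q| != 0.
  apply/negP => /eqP B0.
  have : 0 < #|~: P| by lia'.
  rewrite card_gt0 => /set0Pn [i]; rewrite inE => iP.
  by have := Nt i; rewrite /= iP /=; lia'.
apply: (He (~: P) (~: Q)).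
- by rewrite -card_gt0 lt0n.
- move=> i; rewrite inE => iP; have := Nt i; rewrite /= iP /=; lia'.
- move=> j; rewrite inE => jQ; have := Nb j; rewrite /= jQ /=; lia'.
Qed.
Definition addb m n (e : config m n) K : config m n := (ctop e, [ffun j => cbot e j + K]).

Lemma burn1 m n (e : config m n) : nofsc e -> star (@topple_step m n) (addb e 1) e.
Proof.
move=> He.
have := burn He (erefl (#|~: (set0 : {set 'I_m})| + #|~: (set0 : {set 'I_n})|)).
have E1 : bstate e set0 set0 = addb e 1.
  by apply: cfg_eq => [i|j]; rewrite ?bstateE_t ?bstateE_b /addb /ctop /cbot /= ?ffunE cards0 ?in_set0 ?addn0 ?subn0.
have E2 : bstate e setT setT = e.
  apply: cfg_eq => [i|j]; rewrite ?bstateE_t ?bstateE_b ?in_setT cardsT card_ord.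
    by rewrite addnK.
  by rewrite -addnA add1n addnK.
rewrite E1 E2; apply.
- by move=> i; rewrite in_set0.
- by move=> j; rewrite in_set0.
Qed.

Lemma burn_iter m n (e : config m n) : nofsc e -> forall K, star (@topple_step m n) (addb e K) e.
Proof.
move=> He; elim=> [|K IH].
  have -> : addb e 0 = e by apply: cfg_eq => [i|j]; rewrite /addb /ctop /cbot /= ?ffunE ?addn0.
  exact: star_refl.
pose x : config m n := ([ffun => 0], [ffun => K]).
have := star_addc x (burn1 He).
have -> : addc (addb e 1) x = addb e K.+1.
  by apply: cfg_eq => [i|j]; rewrite /addc /addb /x /ctop /cbot /= !ffunE; lia.
have -> : addc e x = addb e K.
  by apply: cfg_eq => [i|j]; rewrite /addc /addb /x /ctop /cbot /= !ffunE ?addn0.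
move=> H; exact: star_trans H IH.
Qed.

Definition tstate m n (c : config m n) (P : {set 'I_m}) : config m n :=
  ([ffun i => ctop c i + (if i \in P then 0 else n)], [ffun j => cbot c j + #|P|]).
Lemma tstateE_t m n (c : config m n) (P : {set 'I_m}) i :
  ctop (tstate c P) i = ctop c i + (if i \in P then 0 else n).
Proof. by rewrite /tstate /ctop ffunE. Qed.
Lemma tstateE_b m n (c : config m n) (P : {set 'I_m}) j :
  cbot (tstate c P) j = cbot c j + #|P|.
Proof. by rewrite /tstate /cbot ffunE. Qed.

Lemma topphase m n (c : config m n) : forall k (P : {set 'I_m}), #|~: P| = k ->
  star (@topple_step m n) (tstate c P) (tstate c setT).
Proof.
elim=> [|k IH] P Hk.
  have EP : P = setT by rewrite -(setCK P) (cards0_eq Hk) setC0.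
  rewrite EP; exact: star_refl.
have : 0 < #|~: P| by rewrite Hk.
rewrite card_gt0 => /set0Pn [i]; rewrite inE => iP.
apply: (star_step (y := tstate c (i |: P))).
  apply: (ttop_step (i:=i)); first by rewrite tstateE_t (negbTE iP) leq_addl.
  apply: cfg_eq => [x|j]; rewrite ?ttopE_t ?ttopE_b ?tstateE_t ?tstateE_b.
    rewrite in_setU1; case: eqP => [->|_] /=; first by rewrite (negbTE iP) addnK addn0.
    by [].
  by rewrite cardsU1 iP add1n addnS.
apply: IH; have := cardsC (i |: P); have := cardsC P; rewrite cardsU1 iP /=.
lia'.
Qed.

Lemma reach_nofsc m n (d e : config m n) : 0 < n -> stable d -> stable e -> nofsc e ->
  accessible d e.
Proof.
move=> Hn Sd Se He.
pose x : config m n := ([ffun i => ctop e i + n - ctop d i], [ffun j => cbot e j + m - cbot d j]).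
apply: (reach_add Hn (erefl (tsum x + bsum x)) Sd); split => //.
pose c0 := addb e m.
have -> : addc d x = tstate c0 set0.
  case: Sd => Sdt Sdb.
  apply: cfg_eq => [i|j]; rewrite ?tstateE_t ?tstateE_b /addc /c0 /addb /x /ctop /cbot /= !ffunE ?in_set0 ?cards0.
    have := Sdt i; rewrite /ctop; lia.
  have := Sdb j; rewrite /cbot; lia.
apply: star_trans (topphase c0 (erefl _)) _.
have -> : tstate c0 setT = addb e (m + m).
  apply: cfg_eq => [i|j]; rewrite ?tstateE_t ?tstateE_b /c0 /addb /ctop /cbot /= ?ffunE ?in_setT ?addn0 //.
  by rewrite cardsT card_ord addnA.
exact: burn_iter.
Qed.

Definition cmax m n : config m n := ([ffun => n.-1], [ffun => m]).

Lemma stable_cmax m n : 0 < n -> stable (cmax m n).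
Proof. by move=> Hn; split=> [i|j]; rewrite /cmax /ctop /cbot /= ffunE //; lia. Qed.

Lemma nofsc_cmax m n : nofsc (cmax m n).
Proof.
move=> A B HB _ HBb; case/set0Pn: HB => j jB.
have := HBb j jB; have := max_card (mem A); rewrite card_ord /cmax /cbot /= ffunE.
lia'.
Qed.

Lemma count_card n (f : 'I_n -> nat) (p : pred nat) :
  count p [seq f j | j <- enum 'I_n] = #|[set j | p (f j)]|.
Proof. rewrite count_map -sum1_count -sum1_card big_enum_cond /=. apply: eq_bigl => j; by rewrite !inE. Qed.

Lemma L1 (s : seq nat) j k : sorted leq s -> j < size s -> nth 0 s j < k ->
  j < count (fun x => x < k) s.
Proof.
elim: s j => [//|x s IH] [|j] /= Hs Hj Hk; first by rewrite Hk.
have Hall := order_path_min leq_trans Hs.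
have Hx : x <= nth 0 s j by exact: (allP Hall) _ (mem_nth 0 Hj).
have := IH j (path_sorted Hs) Hj Hk.
have -> : x < k by apply: leq_ltn_trans Hx Hk.
by rewrite add1n.
Qed.

Lemma L2 (s : seq nat) j t : sorted leq s -> j < size s -> t <= nth 0 s j ->
  count (fun x => x < t) s <= j.
Proof.
elim: s j => [//|x s IH] [|j] /= Hs Hj Ht.
  have Hall := order_path_min leq_trans Hs.
  rewrite ltnNge Ht /= (@eq_in_count _ _ pred0) ?count_pred0 //.
  move=> y ys /=; have := (allP Hall) y ys; rewrite /= => Hy.
  by rewrite ltnNge (leq_trans Ht Hy).
have := IH j (path_sorted Hs) Hj Ht.
by case: (x < t) => /=; rewrite ?add1n ?add0n // => H; apply: leq_trans H _.
Qed.

Lemma comb m n (c : config m n) :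
  nofsc c <-> forall j : 'I_n, kcount c j.+1 <= nth 0 (sorted_bot c) j.
Proof.
set l := [seq cbot c j | j <- enum 'I_n].
have Hs : sorted leq (sorted_bot c) by apply: sort_sorted; exact: leq_total.
have Hsz : size (sorted_bot c) = n by rewrite /sorted_bot size_sort size_map size_enum_ord.
have Hp : perm_eq (sorted_bot c) l by rewrite /sorted_bot perm_sort.
have Hc : forall p : pred nat, count p (sorted_bot c) = #|[set j | p (cbot c j)]|.
  by move=> p; rewrite (permP Hp) count_card.
split.
- move=> H j; rewrite leqNgt; apply/negP => Hlt.
  set k := kcount c j.+1 in Hlt.
  have HB := L1 Hs (j := j) (k := k); rewrite Hsz ltn_ord Hc in HB.
  have {}HB := HB isT Hlt.
  apply: (H [set i | ctop c i < j.+1] [set j' | cbot c j' < k]).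
  + by rewrite -card_gt0; apply: leq_ltn_trans HB.
  + by move=> i; rewrite inE => Hi; apply: leq_trans Hi HB.
  + by move=> j'; rewrite inE.
- move=> H A B HB HA HBb.
  have b0 : 0 < #|B| by rewrite card_gt0.
  have bn : #|B| <= n by have := max_card (mem B); rewrite card_ord.
  have Hj : #|B|.-1 < n by lia.
  have := H (Ordinal Hj); rewrite /= prednK // => Hk.
  set t := nth 0 (sorted_bot c) #|B|.-1 in Hk.
  have HA' : #|A| <= kcount c #|B|.
    apply: subset_leq_card; apply/subsetP => i iA; rewrite inE; exact: HA.
  have : #|B| <= count (fun x => x < t) (sorted_bot c).
    rewrite Hc; apply: subset_leq_card; apply/subsetP => j jB; rewrite inE.
    by apply: leq_trans (HBb j jB) (leq_trans HA' Hk).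
  have := L2 (j := #|B|.-1) (t := t) Hs; rewrite Hsz Hj leqnn => /(_ isT isT).
  lia.
Qed.

Theorem theorem4p1 (m n : nat) (c : config m n) :
  0 < n -> stable c ->
  (det_recurrent c <->
   forall j : 'I_n, kcount c j.+1 <= nth 0 (sorted_bot c) j).
Proof.
move=> Hn Sc; split.
- move=> [_ Hrec]; apply/comb.
  have acc1 : accessible c (cmax m n) :=
    reach_nofsc Hn Sc (stable_cmax m Hn) (@nofsc_cmax m n).
  exact: nofsc_acc (Hrec _ acc1) (@nofsc_cmax m n).
- move=> /comb Hf; split => // d Hd.
  exact: reach_nofsc Hn (acc_stable Sc Hd) Sc Hf.
Qed.
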